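(* Let $r\geq 2$ be an integer and let $p$ be a real number with $0<p<r$. Then there exists $n_0=n_0(r,p)$ such that for every integer $n\geq n_0$, \[ \phi(r,p,n)=f\bigl(p,T_r(n)\bigr). \]
   Context: All graphs are finite and simple. For a real number $p>0$ and a graph $G$, set $f(p,G)=\sum_{u\in V(G)} d^p(u)$, where $d(u)$ is the degree of $u$ in $G$. For integers $r\geq 2$ and $n\geq 1$, $\phi(r,p,n)$ denotes the maximum of $f(p,G)$ over all $K_{r+1}$-free graphs $G$ of order $n$. $T_r(n)$ denotes the $r$-partite Turán graph of order $n$: the complete $r$-partite graph on $n$ vertices whose $r$ vertex classes have sizes differing pairwise by at most $1$. *)

(* Defs.v *)
From mathcomp Require Import all_boot.
From Stdlib Require Import Reals.
Set Implicit Arguments. Unset Strict Implicit. Unset Printing Implicit Defensive.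

Definition graph (n : nat) := {ffun 'I_n * 'I_n -> bool}.

Definition simple_graph n (G : graph n) : bool :=
  [forall u : 'I_n, forall v : 'I_n, (G (u, v) == G (v, u)) && ~~ G (u, u)].

Definition adj n (G : graph n) (u v : 'I_n) : bool := G (u, v).

Definition deg n (G : graph n) (u : 'I_n) : nat := #|[set v | adj G u v]|.

Definition has_clique n (k : nat) (G : graph n) : bool :=
  [exists S : {set 'I_n}, (#|S| == k) &&
     [forall u in S, forall v in S, (u != v) ==> adj G u v]].

Definition Kfree n (k : nat) (G : graph n) : bool := ~~ has_clique k G.

Definition npow (d : nat) (p : R) : R :=
  if d == 0 then 0%R else Rpower (INR d) p.

Definition fdeg n (p : R) (G : graph n) : R :=
  \big[Rplus/0%R]_(u : 'I_n) npow (deg G u) p.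

(* phi(r,p,n) = max of f(p,G) over K_{r+1}-free simple graphs of order n
   (nonempty family: the empty graph; all values are >= 0, so 0 as the
   neutral element of the max is harmless). *)
Definition phi (r : nat) (p : R) (n : nat) : R :=
  \big[Rmax/0%R]_(G : graph n | simple_graph G && Kfree r.+1 G) fdeg p G.

(* Turan graph T_r(n): vertex i in class (i mod r); classes have sizes
   differing by at most 1; complete r-partite. *)
Definition turan (r n : nat) : graph n :=
  [ffun uv : 'I_n * 'I_n => (uv.1 %% r)%N != (uv.2 %% r)%N].

(* Main.v *)
From HB Require Import structures.
From mathcomp Require Import all_boot zify.
From Stdlib Require Import Reals Lra Psatz.
From Coquelicot Require Import Coquelicot.
Require Import Defs.
Delimit Scope nat_scope with N.
HB.instance Definition _ := Monoid.isComLaw.Build R 0%R Rplus (fun x y z => esym (Rplus_assoc x y z)) Rplus_comm Rplus_0_l.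
Set Implicit Arguments. Unset Strict Implicit. Unset Printing Implicit Defensive.
Section A.
Local Open Scope R_scope.
Local Unset Implicit Arguments.
Variables (N p : R).
Definition EE x := exp (p * ln (N - x)).
Definition KK x := x * EE x.
Definition K1 x := EE x / (N - x) * (N - (p+1) * x).
Definition K2 x := p * EE x / (N - x)^2 * ((p+1) * x - 2 * N).
Lemma dK x : x < N -> is_derive KK x (K1 x).
Proof.
intros H. unfold KK, K1, EE. auto_derive. lra. unfold Rminus. field. lra.
Qed.
Lemma dK1 x : x < N -> is_derive K1 x (K2 x).
Proof.
intros H. unfold K1, K2, EE. auto_derive. repeat split; lra. unfold Rminus. field. lra.
Qed.
End A.
Unset Implicit Arguments.
Lemma mvt f df a b : a <= b -> (forall x, a <= x <= b -> is_derive f x (df x)) ->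
  exists c, a <= c <= b /\ f b - f a = df c * (b - a).
Proof.
intros Hab H. have Hm : Rmin a b = a by apply Rmin_left.
have HM : Rmax a b = b by apply Rmax_right.
destruct (MVT_gen f a b df) as [c [Hc E]].
- intros x Hx. apply H. rewrite Hm HM in Hx; lra.
- intros x Hx. rewrite Hm HM in Hx.
  apply continuity_pt_filterlim. apply (ex_derive_continuous (V:=R_NormedModule)). exists (df x). apply H; lra.
- exists c. rewrite Hm HM in Hc. split; auto.
Qed.

Lemma EE_pos N p x : 0 < EE N p x.
Proof. unfold EE. apply exp_pos. Qed.

Lemma exch (N p r a b : R) : 0 < p -> p < r -> 2 <= r -> 0 <= b -> b + 2 <= a -> a < N ->
  (r - 1) * b + a <= N -> p + 1 <= N -> (p+1)*(r-1) <= N * (r - p) ->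
  KK N p a - KK N p (a-1) <= KK N p (b+1) - KK N p b.
Proof.
intros Hp Hpr Hr Hb Hba HaN Hsum HN1 HN2.
destruct (mvt (KK N p) (K1 N p) b (b+1)) as [xi [Hxi Exi]]. lra.
{ intros x Hx. apply dK. lra. }
destruct (mvt (KK N p) (K1 N p) (a-1) a) as [eta [Heta Eeta]]. lra.
{ intros x Hx. apply dK. lra. }
replace (b + 1 - b) with 1 in Exi by ring. replace (a - (a-1)) with 1 in Eeta by ring.
rewrite Exi Eeta !Rmult_1_r.
destruct (Rle_or_lt ((p+1)*a) (2*N)) as [C|C].
- destruct (mvt (K1 N p) (K2 N p) xi eta) as [z [Hz Ez]]. lra.
  { intros x Hx. apply dK1. lra. }
  assert (K2 N p z <= 0).
  { unfold K2. assert (0 < EE N p z) by apply EE_pos.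
    assert (0 < (N - z)^2) by (apply pow_lt; lra).
    assert (0 <= p * EE N p z / (N - z) ^ 2).
    { apply Rlt_le. unfold Rdiv. apply Rmult_lt_0_compat. apply Rmult_lt_0_compat; lra.
      apply Rinv_0_lt_compat; lra. }
    assert ((p + 1) * z <= 2 * N) by nra.
    nra. }
  nra.
- assert (H1 : 0 <= K1 N p xi).
  { unfold K1. assert (0 < EE N p xi) by apply EE_pos.
    assert (0 <= EE N p xi / (N - xi)).
    { apply Rlt_le. unfold Rdiv. apply Rmult_lt_0_compat. lra. apply Rinv_0_lt_compat; lra. }
    assert ((p+1) * xi <= N).
    { assert ((p+1)*((r-1)*b) <= (p+1)*(N-a)) by (apply Rmult_le_compat_l; lra).
      assert ((p+1)*(r-1)*b < (p-1)*N) by nra.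
      assert ((p+1)*(r-1)*(b+1) <= (r-1) * N).
      { replace ((p+1)*(r-1)*(b+1)) with ((p+1)*(r-1)*b + (p+1)*(r-1)) by ring.
        replace ((r-1)*N) with ((p-1)*N + N*(r-p)) by ring. lra. }
      assert ((p+1)*(b+1) <= N).
      { apply (Rmult_le_reg_l (r-1)). lra. replace ((r-1)*((p+1)*(b+1))) with ((p+1)*(r-1)*(b+1)) by ring. lra. }
      assert ((p+1)*xi <= (p+1)*(b+1)) by (apply Rmult_le_compat_l; lra). lra. }
    nra. }
  assert (H2 : K1 N p eta <= 0).
  { unfold K1. assert (0 < EE N p eta) by apply EE_pos.
    assert (0 <= EE N p eta / (N - eta)).
    { apply Rlt_le. unfold Rdiv. apply Rmult_lt_0_compat. lra. apply Rinv_0_lt_compat; lra. }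
    assert (N <= (p+1) * eta) by nra.
    nra. }
  lra.
Qed.

Set Implicit Arguments.
Definition kk (p : R) (n m : nat) : R := (INR m * npow (n - m) p)%R.

Lemma npow_ge0 d p : (0 <= npow d p)%R.
Proof. rewrite /npow; case: (d == 0)%N; [lra| apply Rlt_le, exp_pos]. Qed.

Lemma kk_ge0 p n m : (0 <= kk p n m)%R.
Proof. rewrite /kk. apply Rmult_le_pos; [apply pos_INR | apply npow_ge0]. Qed.

Lemma INR_subn a b : (b <= a)%N -> INR (a - b) = (INR a - INR b)%R.
Proof. move=> H. rewrite -minusE minus_INR //. apply/leP. done. Qed.

Lemma kk_KK p n m : (m < n)%N -> kk p n m = KK (INR n) p (INR m).
Proof.
move=> H. rewrite /kk /KK /EE /npow.
have -> : (n - m == 0)%N = false by apply/eqP; lia.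
rewrite /Rpower INR_subn //; last lia.
Qed.

Lemma kexch (p : R) (r n a b : nat) : (0 < p)%R -> (p < INR r)%R -> (2 <= r)%N ->
  (p + 1 <= INR n)%R -> ((p+1)*(INR r-1) <= INR n * (INR r - p))%R ->
  (b < a)%N -> (a <= n)%N -> ((r-1)*b + a <= n)%N ->
  (kk p n a + kk p n b <= kk p n (a-1) + kk p n (b+1))%R.
Proof.
move=> Hp Hpr Hr HN1 HN2 Hba Han Hs.
case: (ltngtP a (b+1)) => [H0|Hgt|Eab]; first lia; last first.
  rewrite Eab. have -> : (b + 1 - 1 = b)%N by lia. lra.
case: (ltngtP a n) => [Han'|H0|Ean]; last first.
- have Hb : b = 0%N.
  { move: Hs; rewrite Ean => Hs. have : ((r-1)*b <= 0)%N by lia. rewrite leqn0 muln_eq0. case/orP => /eqP; lia. }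
  subst. rewrite /kk subnn /= Rmult_0_l. have E0 : npow 0 p = 0%R by [].
  rewrite E0. have := kk_ge0 p n (n-1). have := npow_ge0 (n - (0+1)) p.
  rewrite /kk /=. lra.
- lia.
have Hr2 : (2 <= INR r)%R by (apply (le_INR 2); apply/leP).
rewrite (kk_KK p Han') (kk_KK p (n:=n) (m:=b)); last lia.
rewrite (kk_KK p (n:=n) (m:=a-1)); last lia.
rewrite (kk_KK p (n:=n) (m:=b+1)); last lia.
rewrite INR_subn ?plus_INR //=; last lia.
have := exch (INR n) p (INR r) (INR a) (INR b) Hp Hpr Hr2 (pos_INR b).
move=> /(_ _ _ _ HN1 HN2) H.
have Hab : (INR b + 2 <= INR a)%R.
{ have := le_INR (b+2) a. rewrite plus_INR /=. move=> H1; apply H1. apply/leP; lia. }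
have HaN : (INR a < INR n)%R by apply lt_INR; apply/ltP.
have Hs' : ((INR r - 1) * INR b + INR a <= INR n)%R.
{ have := le_INR ((r-1)*b + a) n. rewrite plus_INR mult_INR INR_subn //=; last lia.
  move=> H1; apply H1. apply/leP; lia. }
have := H Hab HaN Hs'. lra.
Qed.


Lemma INR_sum (I : finType) (P : pred I) (F : I -> nat) :
  INR (\sum_(i | P i) F i) = \big[Rplus/0%R]_(i | P i) INR (F i).
Proof. apply: (big_morph INR) => //. move=> x y; exact: plus_INR. Qed.

Lemma Rsum_mulr (I : finType) (P : pred I) (F : I -> R) C :
  (\big[Rplus/0%R]_(i | P i) F i * C = \big[Rplus/0%R]_(i | P i) (F i * C))%R.
Proof. apply: (big_morph (fun x => x * C)%R) => [x y|]; ring. Qed.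

Lemma Rsum_const (I : finType) (P : pred I) C :
  \big[Rplus/0%R]_(i | P i) C = (INR #|P| * C)%R.
Proof.
rewrite -sum1_card INR_sum Rsum_mulr. apply: eq_bigr => i _ /=. ring.
Qed.

Lemma Rsum_le (I : finType) (P : pred I) (F G : I -> R) :
  (forall i, P i -> F i <= G i)%R ->
  (\big[Rplus/0%R]_(i | P i) F i <= \big[Rplus/0%R]_(i | P i) G i)%R.
Proof.
move=> H. apply: (big_ind2 (fun x y => x <= y)%R) => //; first lra.
move=> *; lra.
Qed.

Lemma Rsum_ge0 (I : finType) (P : pred I) (F : I -> R) :
  (forall i, P i -> 0 <= F i)%R -> (0 <= \big[Rplus/0%R]_(i | P i) F i)%R.
Proof.
move=> H. apply: (big_ind (fun x => 0 <= x)%R) => //; first lra. move=> *; lra.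
Qed.

Lemma big2 (T : Type) (idx : T) (op : Monoid.com_law idx) k (F : 'I_k -> T) i1 i0 :
  i0 != i1 ->
  \big[op/idx]_i F i = op (F i1) (op (F i0) (\big[op/idx]_(i | (i != i1) && (i != i0)) F i)).
Proof.
move=> H. rewrite (bigD1 i1) //=. congr (op _ _). by rewrite (bigD1 i0).
Qed.

Definition Vb p n r := (INR (n %% r) * kk p n (n %/ r).+1 + INR (r - n %% r) * kk p n (n %/ r))%R.

Lemma balanced_val p m n (s : 'I_m.+1 -> nat) : \sum_i s i = n ->
  (forall i j, s i <= s j + 1)%N -> \big[Rplus/0%R]_i kk p n (s i) = Vb p n m.+1.
Proof.
move=> Hsum Hbal.
case: (arg_minnP s (P:=xpredT) (i0:=ord0)) => // i0 _ Hmin.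
set q := s i0.
have Hq : forall i, s i = q \/ s i = q.+1.
{ move=> i. have := Hmin i isT. have := Hbal i i0. rewrite -/q. lia. }
set A := [pred i | s i == q.+1].
have HsA : forall i, s i = (q + (A i : nat))%N.
{ move=> i. rewrite /A /=. case: (Hq i) => ->; rewrite ?eqxx; [|by rewrite addn1].
  have -> : (q == q.+1) = false by apply/eqP; lia. by rewrite addn0. }
have Hn : n = (q * m.+1 + #|A|)%N.
{ rewrite -Hsum (eq_bigr (fun i => q + (A i : nat))%N); last by move=> i _; exact: HsA.
  rewrite big_split /= sum_nat_const card_ord.
  rewrite mulnC. congr (_ + _)%N. rewrite -sum1_card [RHS]big_mkcond /=. apply: eq_bigr => i _.
  by case: (A i). }
have HA : (#|A| < m.+1)%N.
{ have := cardC A. rewrite card_ord. have : (0 < #|[predC A]|)%N.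
  { apply/card_gt0P. exists i0. rewrite /= /A /= -/q. apply/negP => /eqP; lia. }
  move=> H1 H2. apply: (leq_trans _ (eq_leq H2)). by rewrite -addn1 leq_add2l. }
have Hdiv : n %/ m.+1 = q by rewrite Hn divnMDl // divn_small // addn0.
have Hmod : n %% m.+1 = #|A| by rewrite Hn modnMDl modn_small.
rewrite /Vb Hdiv Hmod (bigID A) /=.
rewrite (eq_bigr (fun=> kk p n q.+1)); last by move=> i /eqP ->.
rewrite Rsum_const.
rewrite (eq_bigr (fun=> kk p n q)); last first.
{ move=> i Hi. case: (Hq i) => E; first by rewrite E. by rewrite /A /= E eqxx in Hi. }
rewrite Rsum_const. congr (_ + INR _ * _)%R.
have H2 := cardC A. rewrite card_ord in H2. have -> : (m.+1 - #|A| = #|[predC A]|)%N by move: H2; move: (#|A|) (#|[predC A]|) => x y; lia. apply: eq_card => i //.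
Qed.

Lemma opt p m n : (0 < p)%R -> (p < INR m.+1)%R -> (2 <= m.+1)%N ->
  (p + 1 <= INR n)%R -> ((p+1)*(INR m.+1-1) <= INR n * (INR m.+1 - p))%R ->
  forall s : 'I_m.+1 -> nat, \sum_i s i = n ->
  (\big[Rplus/0%R]_i kk p n (s i) <= Vb p n m.+1)%R.
Proof.
move=> Hp Hpr Hr HN1 HN2.
suff H : forall P (s : 'I_m.+1 -> nat), (\sum_i (s i * s i) <= P)%N -> \sum_i s i = n ->
  (\big[Rplus/0%R]_i kk p n (s i) <= Vb p n m.+1)%R.
{ move=> s. exact: (H _ s (leqnn _)). }
elim=> [|P IH] s HP Hsum.
all: case: (arg_minnP s (P:=xpredT) (i0:=ord0)) => // i0 _ Hmin.
all: case: (arg_maxnP s (P:=xpredT) (i0:=ord0)) => // i1 _ Hmax.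
all: case: (leqP (s i1) (s i0 + 1)) => Hb.
1,3: rewrite (balanced_val p Hsum); [exact: Rle_refl|] => i j;
      apply: (leq_trans (Hmax i isT)); apply: (leq_trans Hb); rewrite leq_add2r; exact: (Hmin j isT).
all: have Hne : i0 != i1 by apply/eqP => E; move: Hb; rewrite E ltnNge leq_addr.
all: set a := s i1; set b := s i0.
all: set s' := fun i => if i == i1 then a.-1 else if i == i0 then b.+1 else s i.
all: have Erest : forall F : nat -> R,
       \big[Rplus/0%R]_(i | (i != i1) && (i != i0)) F (s' i) =
       \big[Rplus/0%R]_(i | (i != i1) && (i != i0)) F (s i)
      by move=> F; apply: eq_bigr => i /andP [H1 H2]; rewrite /s' (negPf H1) (negPf H2).
all: have Erestn : forall F : nat -> nat,
       (\sum_(i | (i != i1) && (i != i0)) F (s' i) =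
       \sum_(i | (i != i1) && (i != i0)) F (s i))%N
      by move=> F; apply: eq_bigr => i /andP [H1 H2]; rewrite /s' (negPf H1) (negPf H2).
all: have Es'1 : s' i1 = a.-1 by rewrite /s' eqxx.
all: have Es'0 : s' i0 = b.+1 by rewrite /s' (negPf Hne) eqxx.
all: have Hsq : (\sum_i (s i * s i) = (s i1 * s i1) + ((s i0 * s i0) + \sum_(i | (i != i1) && (i != i0)) (s i * s i)))%N by apply: big2.
all: have Hsq' : (\sum_i (s' i * s' i) = (s' i1 * s' i1) + ((s' i0 * s' i0) + \sum_(i | (i != i1) && (i != i0)) (s' i * s' i)))%N by apply: big2.
all: rewrite (Erestn (fun x : nat => x * x)%N) Es'1 Es'0 in Hsq'.
all: have Hsum' : (\sum_i (s i) = (s i1) + ((s i0) + \sum_(i | (i != i1) && (i != i0)) (s i)))%N by apply: big2.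
all: have Hsum2 : (\sum_i (s' i) = (s' i1) + ((s' i0) + \sum_(i | (i != i1) && (i != i0)) (s' i)))%N by apply: big2.
all: rewrite (Erestn (fun x : nat => x)) Es'1 Es'0 in Hsum2.
all: set rest := (\sum_(i | (i != i1) && (i != i0)) s i)%N in Hsum' Hsum2.
all: set restq := (\sum_(i | (i != i1) && (i != i0)) (s i * s i))%N in Hsq Hsq'.
- exfalso. have H0 : (0 < a * a)%N by rewrite muln_gt0; apply/andP; split; lia.
  move: HP. rewrite Hsq -/a. lia.
- have Hrest : (m.-1 * b <= rest)%N.
  { rewrite /rest. have -> : m.-1 = #|[pred i | (i != i1) && (i != i0)]|.
    { have := cardD1 i0 (predC1 i1). rewrite cardC1 card_ord /= inE /= Hne /=.
      have -> : #|[predD1 predC1 i1 & i0]| = #|[pred i | (i != i1) && (i != i0)]|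
        by apply: eq_card => i; rewrite !inE andbC.
      move: (#|_|) => x. lia. }
    rewrite -sum_nat_const. apply: leq_sum => i _. exact: Hmin. }
  have Hs'sum : \sum_i s' i = n.
  { rewrite Hsum2 -Hsum Hsum' -/a -/b. lia. }
  apply: Rle_trans (IH s' _ Hs'sum).
  + have E1 : \big[Rplus/0%R]_i kk p n (s i) = (kk p n (s i1) + (kk p n (s i0) +
          \big[Rplus/0%R]_(i | (i != i1) && (i != i0)) kk p n (s i)))%R by apply: big2.
    have E2 : \big[Rplus/0%R]_i kk p n (s' i) = (kk p n (s' i1) + (kk p n (s' i0) +
          \big[Rplus/0%R]_(i | (i != i1) && (i != i0)) kk p n (s' i)))%R by apply: big2.
    rewrite (Erest (fun x => kk p n x)) Es'1 Es'0 in E2.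
    rewrite E1 E2 -/a -/b.
    have Hm : (m = m.-1.+1)%N by lia.
    have Hk := kexch Hp Hpr Hr HN1 HN2 (a:=a) (b:=b).
    rewrite (subn1 a) addn1 in Hk.
    have : (kk p n a + kk p n b <= kk p n a.-1 + kk p n b.+1)%R.
    { apply: Hk. rewrite /a /b; lia. rewrite -Hsum Hsum' -/a; lia.
      rewrite -Hsum Hsum' -/a -/b. have -> : (m.+1 - 1 = m.-1.+1)%N by lia. nia. }
    lra.
  + rewrite Hsq'. move: HP. rewrite Hsq -/a -/b. nia.
Qed.


Lemma card_neq n m (c : 'I_n -> 'I_m) i :
  #|[set v | c v != i]| = (n - #|[set v | c v == i]|)%N.
Proof.
have H := cardsC [set v | c v == i]. rewrite card_ord in H.
have -> : #|[set v | c v != i]| = #|~: [set v | c v == i]| by apply: eq_card => v; rewrite !inE.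
move: H. set x := #|[set v | c v == i]|. set y := #|~: _|. lia.
Qed.

Lemma fcol p n m (c : 'I_n -> 'I_m) :
  \big[Rplus/0%R]_(u : 'I_n) npow #|[set v | c v != c u]| p =
  \big[Rplus/0%R]_(i : 'I_m) kk p n #|[set u | c u == i]|.
Proof.
rewrite (partition_big c xpredT) //=. apply: eq_bigr => i _.
rewrite (eq_bigr (fun=> npow (n - #|[set u | c u == i]|) p)); last first.
{ move=> u /eqP ->. by rewrite card_neq. }
rewrite Rsum_const /kk. congr (INR _ * _)%R. apply: eq_card => u. by rewrite !inE.
Qed.

Lemma sum_sizes n m (c : 'I_n -> 'I_m) : \sum_i #|[set u | c u == i]| = n.
Proof.
rewrite -[RHS]card_ord -sum1_card (partition_big c xpredT) //=.
apply: eq_bigr => i _. rewrite -sum1_card. apply: eq_bigl => u. by rewrite !inE.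
Qed.

Lemma count_mod n r i : (0 < r)%N -> (i < r)%N ->
  #|[set u : 'I_n | (u %% r == i)%N]| = (n %/ r + (i < n %% r))%N.
Proof.
move=> Hr Hi.
have -> : #|[set u : 'I_n | (u %% r == i)%N]| = (\sum_(0 <= u < n) (u %% r == i))%N.
{ rewrite big_mkord -sum1_card big_mkcond /=. apply: eq_bigr => u _. rewrite inE.
  by case: (_ == _). }
elim: n => [|n IH]; first by rewrite big_nil div0n mod0n.
rewrite big_nat_recr //= IH.
have Ht : (n %% r < r)%N := ltn_pmod n Hr. have En := divn_eq n r.
move: Ht En. set q := n %/ r. set t := n %% r. move=> Ht En.
case: (ltngtP t.+1 r) => H1.
- have E1 : n.+1 = (q * r + t.+1)%N by rewrite En addnS.
  rewrite E1 divnMDl // (divn_small H1) modnMDl (modn_small H1) addn0.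
  case: (ltngtP i t) => Hit.
  + by rewrite ltnS (ltnW Hit) /= addn0.
  + by rewrite ltnS leqNgt Hit /= !addn0.
  + by rewrite Hit ltnSn /= addn0.
- lia.
- have E1 : n.+1 = (q.+1 * r + 0)%N by rewrite En -addnS H1 mulSn addn0 addnC.
  rewrite E1 divnMDl // div0n modnMDl mod0n addn0 ltn0 addn0.
  have Hit : t = i \/ (i < t)%N by lia.
  case: Hit => [->|Hit]; first by rewrite eqxx ltnn /= addn0 addn1.
  have -> : (t == i) = false by apply/eqP; lia. by rewrite Hit /= !addn0 addn1.
Qed.

Definition cliq n (G : graph n) (T : {set 'I_n}) : bool :=
  [forall u in T, forall v in T, (u != v) ==> adj G u v].

Lemma adj_sym n (G : graph n) u v : simple_graph G -> adj G u v = adj G v u.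
Proof. rewrite /simple_graph /adj. move=> /forallP H. have /forallP H2 := H u. by case/andP: (H2 v) => /eqP. Qed.

Lemma adj_irr n (G : graph n) u : simple_graph G -> adj G u u = false.
Proof. rewrite /simple_graph /adj. move=> /forallP H. have /forallP H2 := H u. by case/andP: (H2 u) => _ /negPf. Qed.

Lemma card_split n (S N : {set 'I_n}) (P : pred 'I_n) : N \subset S ->
  #|[set w in S | P w]| = (#|[set w in N | P w]| + #|[set w in S :\: N | P w]|)%N.
Proof.
move=> NS. rewrite -(cardsID N [set w in S | P w]). congr (_ + _)%N; apply: eq_card => w;
rewrite !inE; case Hw: (w \in N); rewrite ?(subsetP NS w Hw) /= ?andbT ?andbF //.
Qed.

Lemma erdos n (G : graph n) : simple_graph G -> forall k (S : {set 'I_n}),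
  (forall T : {set 'I_n}, T \subset S -> #|T| = k.+1 -> ~~ cliq G T) ->
  exists c : 'I_n -> nat, (forall u, u \in S -> c u < k)%N /\
    (forall u, u \in S -> #|[set w in S | adj G u w]| <= #|[set w in S | c w != c u]|)%N.
Proof.
move=> Hs. elim=> [|k IH] S HS.
{ have K : forall u, u \in S -> False.
  { move=> u Hu. apply: (negP (HS [set u] _ _)); [by rewrite sub1set | by rewrite cards1 | ].
    rewrite /cliq; apply/forallP => x; apply/implyP => /set1P ->; apply/forallP => y;
    apply/implyP => /set1P ->. by rewrite eqxx. }
  exists (fun=> 0%N); split => u Hu; case: (K u Hu). }
case: (set_0Vmem S) => [->|[v0 Hv0]].
{ exists (fun=> 0%N); split => u; by rewrite inE. }
case: (@arg_maxnP _ v0 (fun v => v \in S) (fun v => #|[set w in S | adj G v w]|) Hv0) => v Sv vmax.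
set N := [set w in S | adj G v w].
have NS : N \subset S by apply/subsetP => w; rewrite inE => /andP [].
have HN : forall T : {set 'I_n}, T \subset N -> #|T| = k.+1 -> ~~ cliq G T.
{ move=> T TN cT. apply/negP => cl.
  have vT : v \notin T.
  { apply/negP => vT. have := subsetP TN v vT. by rewrite inE adj_irr // andbF. }
  apply: (negP (HS (v |: T) _ _)).
  - apply/subsetP => x; rewrite !inE => /orP [/eqP ->|xT] //.
    exact: (subsetP NS x (subsetP TN x xT)).
  - by rewrite cardsU1 vT cT.
  - rewrite /cliq; apply/forallP => x; apply/implyP; rewrite !inE => Hx.
    apply/forallP => y; apply/implyP; rewrite !inE => Hy; apply/implyP => xy.
    case/orP: Hx => [/eqP Ex|xT]; case/orP: Hy => [/eqP Ey|yT].
    + by rewrite Ex Ey eqxx in xy.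
    + rewrite Ex. have := subsetP TN y yT. by rewrite inE => /andP [].
    + rewrite Ey adj_sym //. have := subsetP TN x xT. by rewrite inE => /andP [].
    + move: cl => /forallP/(_ x)/implyP/(_ xT)/forallP/(_ y)/implyP/(_ yT)/implyP/(_ xy). done. }
case: (IH N HN) => c' [Hc'1 Hc'2].
exists (fun u => if u \in N then c' u else k). split.
- move=> u Hu. case: ifP => H; last by [].
  have := Hc'1 u H. lia.
move=> u Hu. case: (boolP (u \in N)) => uN.
- rewrite (card_split _ NS) (card_split (fun w => _ != _) NS). apply: leq_add.
  + apply: (leq_trans (Hc'2 u uN)). apply: subset_leq_card. apply/subsetP => w.
    rewrite !inE => /andP [wN H]. by rewrite wN /= H.
  + apply: subset_leq_card. apply/subsetP => w.
    rewrite !inE => /andP [/andP [wN wS] _]. rewrite (negPf wN) wS /=.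
    have := Hc'1 u uN. apply: contraTneq => ->. by rewrite ltnn.
- apply: leq_trans (vmax u Hu) _. apply: subset_leq_card. apply/subsetP => w.
  rewrite !inE => /andP [wS vw]. rewrite wS /=.
  have wN : w \in N by rewrite inE wS vw.
  rewrite vw. have := Hc'1 w wN. apply: contraTneq => ->. by rewrite ltnn.
Qed.

Lemma npow_mono d d' p : (0 < p)%R -> (d <= d')%N -> (npow d p <= npow d' p)%R.
Proof.
move=> Hp Hd. rewrite /npow. case: eqP => [_|/eqP d0]; first exact: npow_ge0.
have -> : (d' == 0%N) = false by apply/eqP; lia.
apply: Rle_Rpower_l; first lra. split.
- apply: lt_0_INR. apply/ltP. lia.
- apply: le_INR. by apply/leP.
Qed.

Lemma bigmax_ge (I : eqType) (s : seq I) (P : pred I) (F : I -> R) x :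
  x \in s -> P x -> (F x <= \big[Rmax/0%R]_(i <- s | P i) F i)%R.
Proof.
elim: s => [//|y s IH] /=. rewrite inE big_cons => /orP [/eqP ->|xs] Px.
- rewrite Px. exact: Rmax_l.
- case: (P y). apply: Rle_trans (IH xs Px) _. exact: Rmax_r. exact: IH.
Qed.

Lemma turan_adj r n u v : adj (turan r n) u v = (u %% r != v %% r)%N.
Proof. by rewrite /adj /turan ffunE. Qed.

Lemma turan_simple r n : simple_graph (turan r n).
Proof.
apply/forallP => u; apply/forallP => v.
rewrite /turan !ffunE /= eqxx andbT. by rewrite (eq_sym (v %% r)%N) eqxx.
Qed.

Lemma turan_free r n : (0 < r)%N -> Kfree r.+1 (turan r n).
Proof.
move=> Hr. apply/negP => /existsP [S /andP [/eqP cS /forallP cl]].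
pose f := fun u : 'I_n => (Ordinal (ltn_pmod u Hr) : 'I_r).
have inj : {in S &, injective f}.
{ move=> x y xS yS E. apply/eqP; apply/negPn/negP => xy.
  have := cl x. rewrite xS /= => /forallP /(_ y). rewrite yS xy /= turan_adj.
  have : val (f x) = val (f y) by rewrite E. by move=> /= ->; rewrite eqxx. }
have := max_card (f @: S). rewrite card_in_imset // cS card_ord. by rewrite ltnn.
Qed.

Lemma fdeg_col p n m (c : 'I_n -> 'I_m) (G : graph n) :
  (forall u, deg G u = #|[set v | c v != c u]|) ->
  fdeg p G = \big[Rplus/0%R]_(i : 'I_m) kk p n #|[set u | c u == i]|.
Proof.
move=> H. rewrite /fdeg -fcol. apply: eq_bigr => u _. by rewrite H.
Qed.

Lemma main_ineq p m n : (0 < p)%R -> (p < INR m.+1)%R -> (2 <= m.+1)%N ->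
  (p + 1 <= INR n)%R -> ((p+1)*(INR m.+1-1) <= INR n * (INR m.+1 - p))%R ->
  phi m.+1 p n = fdeg p (turan m.+1 n).
Proof.
move=> Hp Hpr Hr HN1 HN2.
have Hr0 : (0 < m.+1)%N by [].
pose cT := fun u : 'I_n => (Ordinal (ltn_pmod u Hr0) : 'I_m.+1).
have ET : fdeg p (turan m.+1 n) = Vb p n m.+1.
{ rewrite (@fdeg_col p n m.+1 cT).
  - apply: balanced_val; first exact: sum_sizes.
    move=> i j.
    have E : forall i : 'I_m.+1, #|[set u | cT u == i]| = (n %/ m.+1 + (i < n %% m.+1))%N.
    { move=> i'. by rewrite -count_mod. }
    rewrite !E. case: (i < n %% m.+1)%N; case: (j < n %% m.+1)%N => /=; lia.
  - move=> u. rewrite /deg. apply: eq_card => v. rewrite !inE turan_adj.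
    by rewrite eq_sym. }
apply: Rle_antisym.
- rewrite /phi. apply: (big_ind (fun x => x <= fdeg p (turan m.+1 n))%R).
  + apply: Rsum_ge0 => u _. exact: npow_ge0.
  + move=> x y Hx Hy. exact: Rmax_lub.
  move=> G /andP [Gs Gf].
  have HT : forall T : {set 'I_n}, T \subset setT -> #|T| = m.+2 -> ~~ cliq G T.
  { move=> T _ cT1. apply/negP => cl. move: Gf. rewrite /Kfree => /negP; apply.
    apply/existsP; exists T; rewrite cT1 eqxx /=; exact: cl. }
  have [c [Hc1 Hc2]] := erdos Gs HT.
  rewrite ET.
  pose c' := fun u : 'I_n => (Ordinal (Hc1 u (in_setT u)) : 'I_m.+1).
  apply: (@Rle_trans _ (\big[Rplus/0%R]_(u : 'I_n) npow #|[set v | c' v != c' u]| p)).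
  + rewrite /fdeg. apply: Rsum_le => u _. apply: npow_mono => //. rewrite /deg.
    have := Hc2 u (in_setT u).
    have -> : [set w in setT | adj G u w] = [set v | adj G u v] by apply/setP => w; rewrite !inE.
    have -> : [set w in setT | c w != c u] = [set v | c' v != c' u] by apply/setP => w; rewrite !inE.
    done.
  + rewrite fcol. apply: opt => //. exact: sum_sizes.
- rewrite /phi. apply: bigmax_ge; first by rewrite mem_index_enum.
  by rewrite turan_simple turan_free.
Qed.

Theorem theorem1 (r : nat) (p : R) :
  (2 <= r)%N -> (0 < p)%R -> (p < INR r)%R ->
  exists n0 : nat, forall n : nat, (n0 <= n)%N -> phi r p n = fdeg p (turan r n).
Proof.
move=> Hr Hp Hpr.
case: r Hr Hpr => [//|m] Hr Hpr.
have Hr2 : (2 <= INR m.+1)%R by apply: (le_INR 2); apply/leP.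
set Y := ((p+1)*(INR m.+1 - 1)/(INR m.+1 - p))%R.
have HY : (Y * (INR m.+1 - p) = (p+1)*(INR m.+1 - 1))%R by rewrite /Y; field; lra.
have HY0 : (0 <= Y)%R.
{ rewrite /Y. apply: Rmult_le_pos. apply: Rmult_le_pos; lra.
  apply: Rlt_le. apply: Rinv_0_lt_compat. lra. }
have [n0 Hn0] := INR_archimed 1 (p + 1 + Y) Rlt_0_1.
exists n0 => n Hn. have HnR : (INR n0 <= INR n)%R by apply: le_INR; apply/leP.
rewrite Rmult_1_r in Hn0.
apply: main_ineq => //.
- lra.
- rewrite -HY. apply: Rmult_le_compat_r; lra.
Qed.
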